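(* Let $X$ be a pure $d$-dimensional simplicial complex, $1\le k\le d-1$, and $c\in X(k-1)$. Then the link $X_c$ is isomorphic to $R_c(X)$.
   Context: $X(j)$ = faces with $j+1$ elements; $X_c=\{\tau\setminus c:c\subseteq\tau\in X\}$. The representation complex $R_k(X)$ has vertex set $X(k)$ and, for $1\le i\le d-k$, $i$-faces the sets $S$ of $i+1$ distinct elements of $X(k)$ with $\bigcup S\in X(i+k)$ and $|\bigcap S|=k$; the core of such $S$ is $\bigcap S$. $R_c(X)$ is the complex consisting of $\emptyset$, the vertices $\{\tau\}$ with $\tau\in X(k)$, $c\subseteq\tau$, and all faces of $R_k(X)$ of dimension $\ge1$ whose core is $c$. Two complexes are isomorphic if there is a bijection between their faces preserving inclusion in both directions. *)

(* Defs.v *)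
From mathcomp Require Import all_boot.
Set Implicit Arguments. Unset Strict Implicit. Unset Printing Implicit Defensive.

Definition is_complex (T : finType) (X : {set {set T}}) : Prop :=
  set0 \in X /\
  (forall s t : {set T}, s \in X -> t \subset s -> t \in X).

Definition faces_of_dim (T : finType) (X : {set {set T}}) (j : nat) : {set {set T}} :=
  [set s in X | #|s| == j.+1].

Definition pure_dim (T : finType) (X : {set {set T}}) (d : nat) : Prop :=
  (forall s, s \in X -> #|s| <= d.+1) /\
  (forall s, s \in X -> exists2 t, t \in faces_of_dim X d & s \subset t).

Definition link (T : finType) (X : {set {set T}}) (c : {set T}) : {set {set T}} :=
  [set t :\: c | t in [set t in X | c \subset t]].

Definition Rk_iface (T : finType) (X : {set {set T}}) (d k i : nat)
    (S : {set {set T}}) : bool :=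
  [&& 1 <= i, i <= d - k, #|S| == i.+1, S \subset faces_of_dim X k,
      (\bigcup_(s in S) s) \in faces_of_dim X (i + k)
    & #|\bigcap_(s in S) s| == k].

Definition Rk_face (T : finType) (X : {set {set T}}) (d k : nat)
    (S : {set {set T}}) : bool :=
  [exists i : 'I_d.+1, Rk_iface X d k i S].

Definition core (T : finType) (S : {set {set T}}) : {set T} :=
  \bigcap_(s in S) s.

Definition Rc (T : finType) (X : {set {set T}}) (d k : nat) (c : {set T})
    : {set {set {set T}}} :=
  set0 |: ([set [set t] | t in [set t in faces_of_dim X k | c \subset t]]
      :|: [set S | Rk_face X d k S && (core S == c)]).

Definition complex_iso (T U : finType) (A : {set {set T}}) (B : {set {set U}}) : Prop :=
  exists f : {set T} -> {set U},
    [/\ {in A &, injective f}, f @: A = B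
      & forall s t, s \in A -> t \in A -> (s \subset t) = (f s \subset f t)].

(* Main.v *)
Require Import Defs.
From mathcomp Require Import all_boot.
From mathcomp Require Import zify.
Set Implicit Arguments. Unset Strict Implicit. Unset Printing Implicit Defensive.

Definition gv (T : finType) (c : {set T}) (v : T) : {set T} := c :|: [set v].
Definition fmap (T : finType) (c : {set T}) (s : {set T}) : {set {set T}} :=
  [set gv c v | v in s].

Lemma gv_inj (T : finType) (c : {set T}) v w : v \notin c -> gv c v = gv c w -> v = w.
Proof.
move=> vc E; have: v \in gv c w by rewrite -E !inE eqxx orbT.
by rewrite !inE (negbTE vc) => /eqP.
Qed.

Lemma mem_fmap (T : finType) (c s : {set T}) v :
  v \notin c -> (gv c v \in fmap c s) = (v \in s).
Proof.
move=> vc; apply/imsetP/idP => [[w ws /(gv_inj vc) ->]|vs] //; by exists v.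
Qed.

Lemma fmap_sub (T : finType) (c s t : {set T}) :
  (forall v, v \in s -> v \notin c) ->
  (fmap c s \subset fmap c t) = (s \subset t).
Proof.
move=> ds; apply/idP/idP => [/subsetP H|st]; last exact: imsetS.
apply/subsetP => v vs; have vc := ds v vs.
by rewrite -(mem_fmap t vc); apply: H; rewrite mem_fmap.
Qed.

Lemma link_disj (T : finType) (X : {set {set T}}) (c s : {set T}) :
  s \in link X c -> forall v, v \in s -> v \notin c.
Proof. by case/imsetP=> t _ -> v; rewrite inE => /andP[]. Qed.

Lemma card_split (T : finType) (c t : {set T}) :
  c \subset t -> #|t| = #|c| + #|t :\: c|.
Proof. by move=> ct; rewrite -(cardsID c t) (setIidPr ct). Qed.

Lemma fmap_union (T : finType) (c : {set T}) (S : {set {set T}}) :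
  (forall s, s \in S -> c \subset s /\ #|s| = #|c|.+1) ->
  S = fmap c ((\bigcup_(s in S) s) :\: c).
Proof.
move=> HS.
have form : forall s, s \in S -> exists2 v, v \notin c & s = gv c v.
  move=> s /HS [cs cd]; have : #|s :\: c| == 1.
    by move: cd; rewrite (card_split cs) -addn1 => /eqP; rewrite eqn_add2l.
  case/cards1P=> v Ev; exists v.
    have : v \in s :\: c by rewrite Ev inE.
    by rewrite inE => /andP[].
  by rewrite /gv -Ev -{1}(setIidPr cs) setID.
apply/setP=> s; apply/idP/idP.
  move=> sS; have [v vc Es] := form s sS; rewrite Es mem_fmap // inE vc /=.
  by apply/bigcupP; exists s => //; rewrite Es !inE eqxx orbT.
case/imsetP=> v; rewrite inE => /andP[vc /bigcupP[s' sS vs]] ->.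
have [w wc Es] := form s' sS; move: vs; rewrite Es !inE (negbTE vc) /= => /eqP ->.
by rewrite -Es.
Qed.

Theorem mainTheorem14 (T : finType) (X : {set {set T}}) (d k : nat)
    (c : {set T}) :
  is_complex X -> pure_dim X d ->
  1 <= k -> k <= d.-1 ->
  c \in faces_of_dim X k.-1 ->
  complex_iso (link X c) (Rc X d k c).
Proof.
move=> [X0 Xdown] [Xcard Xpure] k1 kd cX.
have [cXX cc] : c \in X /\ #|c| = k.
  by move: cX; rewrite inE => /andP[-> /eqP ->]; rewrite prednK.
exists (fmap c); split.
- move=> s t /link_disj ds /link_disj dt E; apply/eqP.
  by rewrite eqEsubset -(fmap_sub t ds) -(fmap_sub s dt) E subxx.
- apply/setP=> S; apply/imsetP/idP.
  + case=> s sl ->; have ds := link_disj sl.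
    case/imsetP: sl => t; rewrite inE => /andP[tX ct] Es.
    have tE : t = c :|: s by rewrite Es -{1}(setIidPr ct) setID.
    rewrite /Rc !inE.
    have [->|s0] := eqVneq s set0; first by rewrite /fmap imset0 eqxx.
    have [/cards1P[v Ev]|s1] := boolP (#|s| == 1).
      apply/orP; right; apply/orP; left; apply/imsetP; exists (gv c v).
        have vc : v \notin c by apply: ds; rewrite Ev inE.
        rewrite !inE; apply/andP; split; last by rewrite subsetUl.
        apply/andP; split.
          by apply: (Xdown t) => //; rewrite tE Ev.
        by rewrite /gv setUC cardsU1 vc cc add1n.
      by rewrite Ev /fmap imset_set1.
    have s2 : 1 < #|s|.
      by rewrite ltn_neqAle eq_sym s1 card_gt0.
    have cardf : #|fmap c s| = #|s|.
      rewrite card_in_imset // => v w vs _; exact: gv_inj (ds v vs).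
    have Ucup : \bigcup_(x in fmap c s) x = t.
      apply/setP=> x; rewrite tE; apply/bigcupP/idP.
        case=> y /imsetP[v vs ->]; rewrite !inE => /orP[->//|/eqP->].
        by rewrite vs orbT.
      rewrite inE => /orP[xc|xs].
        case/set0Pn: s0 => v vs; exists (gv c v); first by apply/imsetP; exists v.
        by rewrite inE xc.
      by exists (gv c x); [apply/imsetP; exists x | rewrite !inE eqxx orbT].
    have Ucap : \bigcap_(x in fmap c s) x = c.
      apply/setP=> x; apply/bigcapP/idP; last first.
        by move=> xc y /imsetP[v _ ->]; rewrite inE xc.
      move=> H; case/card_gt1P: s2 => v [w [vs ws vw]].
      have := H _ (imset_f (gv c) vs); have := H _ (imset_f (gv c) ws).
      rewrite !inE => /orP[->//|/eqP xw] /orP[->//|/eqP xv].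
      by move: vw; rewrite -xw -xv eqxx.
    have ts : #|t| = k + #|s| by rewrite (card_split ct) -Es cc.
    apply/orP; right; apply/orP; right; rewrite /core Ucap eqxx andbT.
    have ile : #|s|.-1 < d.+1.
      have := Xcard t tX; rewrite ts; lia.
    apply/existsP; exists (Ordinal ile); rewrite /Rk_iface /=.
    apply/andP; split; [|apply/andP; split; [|apply/andP; split; [|apply/andP; split; [|apply/andP; split]]]].
    * by rewrite -subn1 subn_gt0.
    * have := Xcard t tX; rewrite ts; lia.
    * by rewrite cardf prednK // card_gt0.
    * apply/subsetP=> y /imsetP[v vs ->]; rewrite !inE; apply/andP; split.
        by apply: (Xdown t) => //; rewrite tE /gv setUS // sub1set.
      by rewrite /gv setUC cardsU1 (ds v vs) cc add1n.
    * rewrite Ucup inE tX ts /=; apply/eqP; have := card_gt0 s; rewrite s0; lia.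
    * by rewrite Ucap cc.
  + rewrite /Rc !inE => /orP[/eqP->|/orP[/imsetP[tau tin ->]|/andP[RF /eqP corec]]].
    * exists set0; last by rewrite /fmap imset0.
      by apply/imsetP; exists c; [rewrite inE cXX subxx | rewrite setDv].
    * move: tin; rewrite !inE => /andP[/andP[tX /eqP tk] ct].
      have -> : [set tau] = fmap c ((\bigcup_(s in [set tau]) s) :\: c).
        by apply: fmap_union => s; rewrite inE => /eqP->; rewrite cc tk.
      exists ((\bigcup_(s in [set tau]) s) :\: c) => //.
      by rewrite big_set1; apply/imsetP; exists tau => //; rewrite inE tX ct.
    * case/existsP: RF => i /andP[_ /andP[_ /andP[/eqP Si /andP[Ssub /andP[UX _]]]]].
      have HS : forall s, s \in S -> c \subset s /\ #|s| = #|c|.+1.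
        move=> s sS; split; first by rewrite -corec; exact: bigcap_inf.
        by move/subsetP: Ssub => /(_ s sS); rewrite inE cc => /andP[_ /eqP].
      exists ((\bigcup_(s in S) s) :\: c); last exact: fmap_union.
      apply/imsetP; exists (\bigcup_(s in S) s) => //.
      move: UX; rewrite !inE => /andP[-> _] /=.
      have : 0 < #|S| by rewrite Si.
      case/card_gt0P => s0 s0S; apply: subset_trans (proj1 (HS _ s0S)) _.
      exact: bigcup_sup.
- move=> s t /link_disj ds _; by rewrite fmap_sub.
Qed.
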